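(* Let $p>3$ be a prime, $q=p^h$, and $a,b\in\mathbb{F}_{q^2}^*$. If $\deg\gcd(N_{a,b},D_{a,b})=1$, then $f_{a,b}(X)=X(1+aX^{q(q-1)}+bX^{2(q-1)})$ is not a permutation polynomial of $\mathbb{F}_{q^2}$.
   Context: A polynomial $f\in\mathbb{F}_{q^2}[X]$ is a permutation polynomial of $\mathbb{F}_{q^2}$ if $x\mapsto f(x)$ is a bijection of $\mathbb{F}_{q^2}$. $N_{a,b}(X)=a^qX^3+X^2+b^q$ and $D_{a,b}(X)=bX^3+X+a$. *)

(* Defs.v *)
From HB Require Import structures.
From mathcomp Require Import all_boot all_order all_algebra all_field.
Set Implicit Arguments. Unset Strict Implicit. Unset Printing Implicit Defensive.
Import GRing.Theory.
Local Open Scope ring_scope.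

Definition perm_poly (F : finFieldType) (f : {poly F}) : Prop :=
  bijective (fun x : F => f.[x]).

Definition Npoly (F : finFieldType) (q : nat) (a b : F) : {poly F} :=
  (a ^+ q) *: 'X^3 + 'X^2 + (b ^+ q)%:P.

Definition Dpoly (F : finFieldType) (a b : F) : {poly F} :=
  b *: 'X^3 + 'X + a%:P.

Definition fpoly (F : finFieldType) (q : nat) (a b : F) : {poly F} :=
  'X * (1 + a *: 'X^(q * (q - 1)) + b *: 'X^(2 * (q - 1))).

(* Main.v *)
Require Import Defs.
From HB Require Import structures.
From mathcomp Require Import all_boot all_order all_fingroup all_algebra all_solvable all_field.
From mathcomp Require Import zify.
Import GRing.Theory.
Local Open Scope ring_scope.

Lemma exists_root_qm1 (F : finFieldType) (q : nat) (r : F) :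
  (0 < q)%N -> #|F| = (q ^ 2)%N -> r ^+ q.+1 = 1 ->
  exists x : F, x != 0 /\ x ^+ (q - 1) = r.
Proof.
move=> q0 cF rq.
have Ur : r \is a GRing.unit.
  rewrite unitfE; apply/eqP=> r0; move: rq; rewrite r0 expr0n /= => /eqP.
  by rewrite eq_sym oner_eq0.
pose ur : {unit F} := FinRing.Unit Ur.
have /cyclicP [g Hg] := field_unit_group_cyclic [group of [set: {unit F}]].
have : ur \in <[g]>%g by rewrite -Hg inE.
case/cycleP=> k Hk.
have og : #[g]%g = (q ^ 2 - 1)%N.
  by rewrite /order -Hg card_finField_unit cF; lia.
have : (#[g]%g %| k * q.+1)%N.
  rewrite order_dvdn expgM -Hk; apply/eqP/val_inj.
  by rewrite FinRing.val_unitX /= rq.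
rewrite og.
have -> : (q ^ 2 - 1 = (q - 1) * q.+1)%N by nia.
rewrite dvdn_pmul2r // => /dvdnP [m Hm].
exists (val (g ^+ m)%g); split.
  by rewrite -unitfE (valP (g ^+ m)%g).
by rewrite -FinRing.val_unitX -expgM -Hm -Hk.
Qed.
From mathcomp Require Import ring.
Lemma frobD (p h : nat) (F : finFieldType) : p \in [pchar F] ->
  forall x y : F, (x + y) ^+ (p ^ h) = x ^+ (p ^ h) + y ^+ (p ^ h).
Proof.
move=> pc x y; apply: exprDn_pchar.
by rewrite pnatX (pnatE _ (pcharf_prime pc)) pc.
Qed.
Lemma horn2 (F : fieldType) (g : {poly F}) x : size g = 2%N ->
  g.[x] = g`_0 + g`_1 * x.
Proof.
move=> sg; rewrite horner_coef sg big_ord_recr big_ord_recr big_ord0 /=.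
by rewrite add0r expr0 mulr1 expr1.
Qed.
Lemma NE (F : finFieldType) q a b (x : F) : (Npoly q a b).[x] = a ^+ q * x ^+ 3 + x ^+ 2 + b ^+ q.
Proof. by rewrite /Npoly !hornerE. Qed.
Lemma DE (F : finFieldType) a b (x : F) : (Dpoly a b).[x] = b * x ^+ 3 + x + a.
Proof. by rewrite /Dpoly !hornerE. Qed.
Lemma fE (F : finFieldType) q a b (x : F) : (fpoly q a b).[x] =
   x * (1 + a * x ^+ (q * (q - 1)) + b * x ^+ (2 * (q - 1))).
Proof. by rewrite /fpoly !hornerE. Qed.

Theorem mainTheorem6 (p h : nat) (F : finFieldType) (a b : F) :
  prime p -> (3 < p)%N -> (0 < h)%N ->
  #|F| = ((p ^ h) ^ 2)%N ->
  a != 0 -> b != 0 ->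
  size (gcdp (Npoly (p ^ h) a b) (Dpoly a b)) = 2%N ->
  ~ perm_poly (fpoly (p ^ h) a b).
Proof.
move=> pp p3 h0 cF a0 b0 sg.
have pc : p \in [pchar F] by apply: (@card_finPcharP F p (h * 2)) => //; rewrite cF expnM.
set q := (p ^ h)%N in cF sg *.
have q0 : (0 < q)%N by rewrite expn_gt0 prime_gt0.
have fr := @frobD p h F pc; rewrite -/q in fr.
have qq : forall x : F, (x ^+ q) ^+ q = x.
  by move=> x; rewrite -exprM -{2}(expf_card x) cF mulnn.
set g := gcdp _ _ in sg.
have uniq_root : forall x y, root g x -> root g y -> x = y.
  move=> x y; rewrite !rootE !horn2 // => /eqP hx /eqP hy.
  have g1 : g`_1 != 0.
    have := lead_coef_eq0 g; rewrite lead_coefE sg /= => ->.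
    by apply/eqP=> g0; move: sg; rewrite g0 size_poly0.
  apply/eqP; rewrite -subr_eq0 -(mulIr_eq0 _ (mulIf g1)).
  by apply/eqP; rewrite mulrBl [x * _]mulrC [y * _]mulrC; apply/eqP; rewrite subr_eq0; apply/eqP;
     apply: (addrI g`_0); rewrite hx hy.
have g1 : g`_1 != 0.
  have := lead_coef_eq0 g; rewrite lead_coefE sg /= => ->.
  by apply/eqP=> g0; move: sg; rewrite g0 size_poly0.
have [r rg] : exists r, root g r.
  by exists (- g`_0 / g`_1); rewrite rootE horn2 // mulrC divfK // subrr.
move: (rg); rewrite root_gcd => /andP [/eqP Nr /eqP Dr].
rewrite NE in Nr; rewrite DE in Dr.
have r0 : r != 0 by apply/eqP=> r0; move: Dr; rewrite r0 expr0n /= mulr0 !add0r; apply/eqP.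
have rq0 : r ^+ q != 0 by rewrite expf_neq0.
pose s := (r ^+ q)^-1.
have sq : s ^+ q = r^-1 by rewrite /s exprVn qq.
have Ds : b * s ^+ 3 + s + a = 0.
  have H : forall z : F, z ^+ q = 0 -> z = 0 by move=> z /eqP; rewrite expf_eq0 q0 => /eqP.
  apply: H.
  have -> : (b * s ^+ 3 + s + a) ^+ q = b ^+ q * (s ^+ q) ^+ 3 + s ^+ q + a ^+ q.
    by rewrite !fr exprMn exprAC.
  rewrite sq.
  have : r ^+ 3 * (b ^+ q * r^-1 ^+ 3 + r^-1 + a ^+ q) = 0.
    rewrite -Nr; field; exact: r0.
  by move/eqP; rewrite mulf_eq0 expf_eq0 /= (negbTE r0) => /eqP.
have Ns : a ^+ q * s ^+ 3 + s ^+ 2 + b ^+ q = 0.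
  have : (r ^+ q) ^+ 3 * (a ^+ q * s ^+ 3 + s ^+ 2 + b ^+ q) = (b * r ^+ 3 + r + a) ^+ q.
    rewrite !fr exprMn [(r ^+ 3) ^+ q]exprAC /s; move: rq0; set t := r ^+ q => rq0; field; exact: rq0.
  rewrite Dr expr0n /= gtn_eqF // => /eqP; rewrite mulf_eq0 expf_eq0 /= (negbTE rq0) => /eqP //.
have sg' : root g s by rewrite root_gcd rootE NE Ns rootE DE Ds eqxx.
have sr := uniq_root _ _ sg' rg.
have rqV : r ^+ q = r^-1 by rewrite -[r ^+ q]invrK -/s sr.
have rq1 : r ^+ q.+1 = 1 by rewrite exprSr rqV mulVf.
have [x [x0 xr]] := @exists_root_qm1 F q r q0 cF rq1.
case=> f fK Kf.
have fx0 : (fpoly q a b).[x] = (fpoly q a b).[0].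
  rewrite !fE mul0r mulnC exprM xr [(2 * _)%N]mulnC exprM xr rqV.
  have -> : 1 + a * r^-1 + b * (r ^+ 2) = r^-1 * (b * r ^+ 3 + r + a).
    by field.
  by rewrite Dr !mulr0.
have := congr1 f fx0; rewrite !fK => x0'; move: x0; rewrite x0' eqxx //.
Qed.
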